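(* Let $G$ and $H$ be two graphs of orders $m$ and $n$ respectively such that $E(G)\neq\emptyset$ and $E(H)\neq\emptyset$. Then $\chi_{ei}(G\vee H)=m+n$.
   Context: All graphs are finite and simple. A path $P_4$ in $G$ is a sequence $uxyv$ of four distinct vertices with $ux,xy,yv\in E(G)$; $u,v$ are its end vertices. An $e$-injective $k$-coloring of $G$ is a function $f:V(G)\to\{1,\dots,k\}$ with $f(u)\ne f(v)$ whenever $u,v$ are the end vertices of some path $P_4$ in $G$; $\chi_{ei}(G)$ is the least such $k$. The join $G\vee H$ is the graph obtained from the disjoint union of $G$ and $H$ by adding all edges $xy$ with $x\in V(G)$, $y\in V(H)$. *)

(* Defs.v *)
From mathcomp Require Import all_boot.
Set Implicit Arguments. Unset Strict Implicit. Unset Printing Implicit Defensive.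

Record sgraph (V : finType) := SGraph {
  adj : rel V;
  adj_sym : symmetric adj;
  adj_irr : irreflexive adj }.

Definition has_edge (V : finType) (G : sgraph V) : Prop :=
  exists x y : V, adj G x y.

Definition P4_ends (V : finType) (G : sgraph V) (u v : V) : bool :=
  [exists x : V, exists y : V,
     [&& uniq [:: u; x; y; v], adj G u x, adj G x y & adj G y v]].

(* e-injective k-coloring; the colors {1,...,k} are represented by 'I_k *)
Definition ei_coloring (V : finType) (G : sgraph V) (k : nat) (f : {ffun V -> 'I_k}) : bool :=
  [forall u : V, forall v : V, P4_ends G u v ==> (f u != f v)].

Definition ei_colorable (V : finType) (G : sgraph V) (k : nat) : bool :=
  [exists f : {ffun V -> 'I_k}, ei_coloring G f].

Lemma ei_colorable_ex (V : finType) (G : sgraph V) : exists k, ei_colorable G k.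
Proof.
exists #|V|; apply/existsP; exists [ffun v => enum_rank v].
apply/forallP => u; apply/forallP => v; apply/implyP => /existsP [x /existsP [y]].
case/and4P => Hu _ _ _; rewrite !ffunE; apply/negP => /eqP /enum_rank_inj Huv.
by move: Hu; rewrite Huv /= !inE eqxx /= !orbT.
Qed.

Definition chi_ei (V : finType) (G : sgraph V) : nat :=
  ex_minn (ei_colorable_ex G).
Definition join_adj (V1 V2 : finType) (G : sgraph V1) (H : sgraph V2) : rel (V1 + V2)%type :=
  fun a b => match a, b with
  | inl x, inl y => adj G x y
  | inr x, inr y => adj H x y
  | _, _ => true
  end.

Lemma join_adj_sym (V1 V2 : finType) (G : sgraph V1) (H : sgraph V2) :
  symmetric (join_adj G H).
Proof. by case=> x [] y //=; apply: adj_sym. Qed.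

Lemma join_adj_irr (V1 V2 : finType) (G : sgraph V1) (H : sgraph V2) :
  irreflexive (join_adj G H).
Proof. by case=> x /=; apply: adj_irr. Qed.

Definition sjoin (V1 V2 : finType) (G : sgraph V1) (H : sgraph V2) : sgraph (V1 + V2)%type :=
  SGraph (join_adj_sym G H) (join_adj_irr G H).

(* Main.v *)
Require Import Defs.
From mathcomp Require Import all_boot.

Lemma other_vertex (T : finType) (K : sgraph T) :
  has_edge K -> forall z : T, exists w, w != z.
Proof.
case=> c [d Hcd] z; case: (eqVneq c z) => [E|]; last by exists c.
exists d; apply/eqP => E'; subst; by rewrite adj_irr in Hcd.
Qed.

Lemma edge_neq (T : finType) (K : sgraph T) x y : adj K x y -> x != y.
Proof. by apply: contraTneq => ->; rewrite adj_irr. Qed.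

Lemma eq_inl (A B : eqType) (x y : A) : (inl x == inl y :> A + B) = (x == y).
Proof. by apply/eqP/eqP => [[]|->]. Qed.
Lemma eq_inr (A B : eqType) (x y : B) : (inr x == inr y :> A + B) = (x == y).
Proof. by apply/eqP/eqP => [[]|->]. Qed.
Lemma eq_inlr (A B : eqType) (x : A) (y : B) : (inl x == inr y :> A + B) = false.
Proof. by []. Qed.
Lemma eq_inrl (A B : eqType) (x : A) (y : B) : (inr y == inl x :> A + B) = false.
Proof. by []. Qed.

Lemma all_P4 (V1 V2 : finType) (G : sgraph V1) (H : sgraph V2) :
  has_edge G -> has_edge H -> forall u v, u != v -> P4_ends (sjoin G H) u v.
Proof.
move=> hG hH u v neq.
have hG' := hG; have hH' := hH.
case: hG' => a [b ab]; case: hH' => c [d cd].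
have nab := @edge_neq _ G _ _ ab; have ncd := @edge_neq _ H _ _ cd.
rewrite /P4_ends.
case: u v neq => [u|u] [v|v] neq.
- apply/existsP; exists (inr c); apply/existsP; exists (inr d).
  rewrite /= cd !andbT !inE /=.
  rewrite !eq_inl ?eq_inr ?eq_inlr ?eq_inrl in neq *.
  by rewrite neq orbF.
- have [w hw] := @other_vertex _ H hH v; have [z hz] := @other_vertex _ G hG u.
  apply/existsP; exists (inr w); apply/existsP; exists (inl z).
  by rewrite /= !andbT !inE /= ?eq_inl ?eq_inr ?eq_inlr ?eq_inrl /= ?orbF hw eq_sym hz.
- have [w hw] := @other_vertex _ G hG v; have [z hz] := @other_vertex _ H hH u.
  apply/existsP; exists (inl w); apply/existsP; exists (inr z).
  by rewrite /= !andbT !inE /= ?eq_inl ?eq_inr ?eq_inlr ?eq_inrl /= ?orbF hw eq_sym hz.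
- apply/existsP; exists (inl a); apply/existsP; exists (inl b).
  rewrite /= ab !andbT !inE /=.
  rewrite !eq_inr ?eq_inl ?eq_inlr ?eq_inrl in neq *.
  by rewrite neq orbF.
Qed.

Theorem proposition2p6 (V1 V2 : finType) (G : sgraph V1) (H : sgraph V2)
  (m n : nat) (hm : #|V1| = m) (hn : #|V2| = n) :
  has_edge G -> has_edge H -> chi_ei (sjoin G H) = m + n.
Proof.
move=> hG hH; rewrite -hm -hn -card_sum /chi_ei.
case: ex_minnP => k /existsP [f /forallP Hf] Hmin.
apply/eqP; rewrite eqn_leq; apply/andP; split.
  apply: Hmin; apply/existsP; exists [ffun v => enum_rank v].
  apply/forallP => u; apply/forallP => v; apply/implyP => /existsP [x /existsP [y]].
  case/and4P => Hu _ _ _; rewrite !ffunE; apply/negP => /eqP /enum_rank_inj Huv.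
  by move: Hu; rewrite Huv /= !inE eqxx /= !orbT.
rewrite -[k]card_ord; apply: (@leq_card _ _ f) => u v E.
apply/eqP; apply/negPn/negP => neq.
by move: (Hf u) => /forallP /(_ v) /implyP /(_ (@all_P4 _ _ G H hG hH _ _ neq)); rewrite E eqxx.
Qed.
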